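(* Let $K\in\mathbb N$, let $(p_0,\dots,p_K)$ be a probability vector with all $p_j>0$, and for $u\in[0,1)$ and $j\in\{0,\dots,K\}$ let $a_j(u),b_j(u)$ satisfy $0\le a_j(u)\le a_j(u)+b_j(u)\le1$ with $j\mapsto(a_j(u),b_j(u))$ injective for each $u$; let $S_j(u)x=a_j(u)+b_j(u)x$. Assume moreover that for every $z\in[0,1]$ and every $i$, the function $u\mapsto S_i(u)z$ is right-continuous and nondecreasing on $[0,1)$, and that $\Theta_0:[0,1)\to[0,1]$ is right-continuous and nondecreasing. Let $(B_t)_{t\in\mathbb N}$ be IID with $P(B_1=j)=p_j$, define $\Theta_t(u)=a_{B_t}(u)+b_{B_t}(u)\Theta_{t-1}(u)$ for $u\in[0,1)$, $t\ge1$, and extend each $\Theta_t$ to a CDF on $\mathbb R$ by $\Theta_t(u)=0$ for $u<0$ and $\Theta_t(u)=1$ for $u\ge1$. Let $N_{t,j}=|\{1\le s\le t:B_s=j\}|$. Then the distribution of the random CDFs $\Theta_t(\cdot)$ converges as $t\to\infty$ to the distribution of the random CDF $$\tilde\Theta_\infty(u)=\begin{cases}0,&u<0,\\ \sum_{s=1}^\infty a_{B_s}(u)\prod_{i=0}^K b_i^{N_{s-1,i}}(u),&u\in[0,1),\\ 1,&u\ge1.\end{cases}$$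
   Context: Convention: $0^0=1$. *)

(* Defs.v *)
From HB Require Import structures.
From mathcomp Require Import all_boot all_order all_algebra.
From mathcomp Require Import all_classical all_reals all_analysis.
Set Implicit Arguments. Unset Strict Implicit. Unset Printing Implicit Defensive.
Import Order.TTheory GRing.Theory Num.Theory.
Import numFieldNormedType.Exports.
Local Open Scope classical_set_scope.
Local Open Scope ring_scope.

(* Indexing convention: the paper's B_t (t = 1,2,...) is [B (t-1)] here,
   i.e. B : nat -> Omega -> 'I_K.+1 and B s is the paper's B_{s+1}. *)

Definition iid_seq {R : realType} {d : measure_display} {Omega : measurableType d}
  (P : probability Omega R) (K : nat) (B : nat -> Omega -> 'I_K.+1)
  (p : 'I_K.+1 -> R) : Prop :=
  (forall n j, measurable [set w | B n w = j]) /\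
  (forall (s : seq nat) (v : nat -> 'I_K.+1), uniq s ->
     P [set w | forall i, i \in s -> B i w = v i] = (\prod_(i <- s) p (v i))%:E).

Fixpoint theta_iter {R : realType} {Omega : Type} {K : nat}
  (a b : 'I_K.+1 -> R -> R) (th0 : R -> R) (B : nat -> Omega -> 'I_K.+1)
  (t : nat) (w : Omega) (u : R) : R :=
  match t with
  | 0 => th0 u
  | t'.+1 => a (B t' w) u + b (B t' w) u * theta_iter a b th0 B t' w u
  end.

Definition Theta {R : realType} {Omega : Type} {K : nat}
  (a b : 'I_K.+1 -> R -> R) (th0 : R -> R) (B : nat -> Omega -> 'I_K.+1)
  (t : nat) (w : Omega) (u : R) : R :=
  if u < 0 then 0 else if 1 <= u then 1 else theta_iter a b th0 B t w u.

Definition Ncount {Omega : Type} {K : nat} (B : nat -> Omega -> 'I_K.+1)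
  (t : nat) (i : 'I_K.+1) (w : Omega) : nat :=
  \sum_(r < t) (B r w == i).

Definition ThetaInf {R : realType} {Omega : Type} {K : nat}
  (a b : 'I_K.+1 -> R -> R) (B : nat -> Omega -> 'I_K.+1)
  (w : Omega) (u : R) : R :=
  if u < 0 then 0 else if 1 <= u then 1 else
  limn (series (fun r => a (B r w) u * \prod_(i < K.+1) b i u ^+ Ncount B r i w)).

(* Convergence in distribution of random functions R -> R (product topology),
   i.e. convergence of all finite-dimensional distributions: for every finite
   family of points, E f(X_t(u_1),...,X_t(u_n)) -> E f(X(u_1),...,X(u_n)) for
   every bounded continuous f. *)
Definition fidi_cvg_dist {R : realType} {d : measure_display}
  {Omega : measurableType d} (P : probability Omega R)
  (X : nat -> Omega -> R -> R) (Y : Omega -> R -> R) : Prop :=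
  forall (n : nat) (us : 'I_n -> R) (f : 'rV[R]_n -> R),
    continuous f -> (exists M : R, forall x, `|f x| <= M) ->
    (fun t => (\int[P]_w (f (\row_k X t w (us k)))%:E)%E) @ \oo -->
      (\int[P]_w (f (\row_k Y w (us k)))%:E)%E.

(* Main.v *)
Require Import Defs.
From HB Require Import structures.
From mathcomp Require Import all_boot all_order all_algebra.
From mathcomp Require Import all_classical all_reals all_analysis.
Import Order.TTheory GRing.Theory Num.Theory.
Import numFieldNormedType.Exports.
Local Open Scope classical_set_scope.
Local Open Scope ring_scope.
From mathcomp Require Import lra measurable_realfun.
Set Implicit Arguments. Unset Strict Implicit. Unset Printing Implicit Defensive.

Section Tup.
Context (Omega : Type) (K : nat) (B : nat -> Omega -> 'I_K.+1).

Lemma tup_subproof t w : size [seq B i w | i <- iota 0 t] == t.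
Proof. by rewrite size_map size_iota. Qed.

Definition tup t w : t.-tuple 'I_K.+1 := Tuple (tup_subproof t w).

Lemma nth_tup t w i : (i < t)%N -> nth ord0 (tup t w) i = B i w.
Proof. by move=> it; rewrite /= (nth_map 0) ?size_iota // nth_iota. Qed.

Lemma tupE t w (v : t.-tuple 'I_K.+1) :
  (tup t w = v) <-> (forall i, i \in iota 0 t -> B i w = nth ord0 v i).
Proof.
split.
- by move=> <- i; rewrite mem_iota add0n => /andP[_ it]; rewrite nth_tup.
- move=> H; apply: val_inj => /=.
  apply: (@eq_from_nth _ ord0); first by rewrite size_map size_iota size_tuple.
  move=> i; rewrite size_map size_iota => it.
  rewrite (nth_map 0) ?size_iota // nth_iota // add0n; apply: H.
  by rewrite mem_iota.
Qed.

Lemma tup_eq t w w' : tup t w = tup t w' -> forall i, (i < t)%N -> B i w = B i w'.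
Proof. by move=> e i it; rewrite -(nth_tup w it) e nth_tup. Qed.

End Tup.

Section Part1.
Context (R : realType) (d : measure_display) (Omega : measurableType d)
  (P : probability Omega R) (K : nat) (B : nat -> Omega -> 'I_K.+1)
  (p : 'I_K.+1 -> R).
Hypothesis hB : iid_seq P B p.
Local Notation tup := (tup B).

Definition E t (v : t.-tuple 'I_K.+1) := [set w | tup t w = v].

Lemma E_eq t (v : t.-tuple _) : E v = [set w | forall i, i \in iota 0 t -> B i w = nth ord0 v i].
Proof. by apply/seteqP; split => w /=; move/tupE. Qed.

Lemma mE t v : measurable (@E t v).
Proof.
rewrite E_eq.
have -> : [set w | forall i, i \in iota 0 t -> B i w = nth ord0 v i] =
  \bigcap_(i in [set i | i \in iota 0 t]) [set w | B i w = nth ord0 v i].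
  by apply/seteqP; split => w /= H i; apply: H.
by apply: bigcap_measurableType => k _; apply: hB.1.
Qed.

Lemma PE t v : P (@E t v) = (\prod_(x <- v) p x)%:E.
Proof.
rewrite E_eq (hB.2 (iota 0 t) (fun n => nth ord0 v n) (iota_uniq 0 t)).
by rewrite (big_nth ord0) size_tuple /index_iota subn0.
Qed.

Lemma meas_dep t (h : Omega -> R) :
  (forall w w', tup t w = tup t w' -> h w = h w') -> measurable_fun setT h.
Proof.
move=> hd _ Y mY; rewrite setTI.
have -> : h @^-1` Y = \bigcup_(v in [set v | exists w, tup t w = v /\ Y (h w)]) @E t v.
  apply/seteqP; split => w /=.
  - by move=> Yw; exists (tup t w) => //; exists w.
  - by move=> [v [w' [<- Yw']] /= e]; rewrite (hd _ _ e).
apply: fin_bigcup_measurable; first exact: finite_finset.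
by move=> v _; apply: mE.
Qed.

Lemma int_tup t (H : t.-tuple 'I_K.+1 -> R) :
  (\int[P]_w (H (tup t w))%:E = (\sum_(v : t.-tuple 'I_K.+1) H v * \prod_(x <- v) p x)%:E)%E.
Proof.
have eH w : (H (tup t w))%:E =
   (\sum_(v : t.-tuple 'I_K.+1) (H v)%:E * (\1_(@E t v) w)%:E)%E.
  rewrite (bigD1 (tup t w)) //= big1 ?adde0.
    by rewrite indicE mem_set //= mule1.
  move=> v /negbTE vn; rewrite indicE memNset ?mule0 //= => e.
  by move: vn; rewrite e eqxx.
under eq_integral do rewrite eH.
rewrite integral_sum //; last first.
  by move=> v; apply: integrableZl => //; apply: integrable_indic; apply: mE.
rewrite -sumEFin; apply: eq_bigr => v _.
rewrite integralZl //; last by apply: integrable_indic; apply: mE.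
rewrite integral_indic; last exact: mE.
rewrite setIT EFinM; congr (_ * _)%E; exact: PE.
exact: measurableT.
Qed.

End Part1.

Section Part2.
Context (R : realType) (Omega : Type) (K : nat) (B : nat -> Omega -> 'I_K.+1)
  (a b : 'I_K.+1 -> R -> R) (th0 : R -> R).

Definition fold (s : seq 'I_K.+1) u := foldr (fun j z => a j u + b j u * z) (th0 u) s.
Definition ext (g : R -> R) (u : R) : R := if u < 0 then 0 else if 1 <= u then 1 else g u.

Lemma tupS t w : val (tup B t.+1 w) = rcons (val (tup B t w)) (B t w).
Proof.
change ([seq B i w | i <- iota 0 t.+1] = rcons [seq B i w | i <- iota 0 t] (B t w)).
by rewrite -[t.+1]addn1 iotaD map_cat cats1.
Qed.

Lemma theta_iterE t w u : theta_iter a b th0 B t w u = fold (rev (tup B t w)) u.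
Proof.
elim: t => [//|t IH].
rewrite [in RHS](_ : rev (tup B t.+1 w) = B t w :: rev (tup B t w)); last first.
  by rewrite tupS rev_rcons.
by rewrite /= IH.
Qed.

Lemma ThetaE t w u : Theta a b th0 B t w u = ext (fold (rev (tup B t w))) u.
Proof. by rewrite /Theta /ext theta_iterE. Qed.

Lemma foldE (s : seq 'I_K.+1) u : fold s u =
  \sum_(r < size s) a (nth ord0 s r) u * \prod_(i < r) b (nth ord0 s i) u
  + \prod_(i < size s) b (nth ord0 s i) u * th0 u.
Proof.
elim: s => [|x s IH]; first by rewrite /= big_ord0 big_ord0 add0r mul1r.
have h r : \prod_(i < r.+1) b (nth ord0 (x :: s) i) u =
    b x u * \prod_(i < r) b (nth ord0 s i) u by rewrite big_ord_recl.
rewrite /= IH big_ord_recl /= big_ord0 mulr1.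
rewrite [in RHS](eq_bigr (fun i : 'I_(size s) => a (nth ord0 s i) u *
   (b x u * \prod_(j < i) b (nth ord0 s j) u))); last first.
  by move=> i _; rewrite (_ : bump 0 i = i.+1) // add0n h.
rewrite h mulrDr big_distrr /= addrA; congr (_ + _ + _).
  by apply: eq_bigr => i _; rewrite mulrCA.
by rewrite mulrA.
Qed.

Definition gterm w u r := a (B r w) u * \prod_(i < K.+1) b i u ^+ Ncount B r i w.

Lemma prodN r w u :
  \prod_(i < K.+1) b i u ^+ Ncount B r i w = \prod_(s < r) b (B s w) u.
Proof.
elim: r => [|r IH].
  by rewrite big_ord0 big1 // => i _; rewrite /Ncount big_ord0 expr0.
have eN i : Ncount B r.+1 i w = (Ncount B r i w + (B r w == i))%N.
  by rewrite /Ncount big_ord_recr.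
under eq_bigr do rewrite eN exprD.
rewrite big_split /= IH [in RHS]big_ord_recr /=; congr (_ * _).
rewrite (bigD1 (B r w)) //= eqxx expr1 big1 ?mulr1 // => i /negbTE.
by rewrite eq_sym => ->; rewrite expr0.
Qed.

Lemma fold_tup t w u : fold (tup B t w) u =
  series (gterm w u) t + \prod_(s < t) b (B s w) u * th0 u.
Proof.
rewrite foldE size_tuple seriesEord /=; congr (_ + _ * _).
  apply: eq_bigr => r _; rewrite /gterm prodN nth_tup //; congr (_ * _).
  by apply: eq_bigr => i _; rewrite nth_tup // (ltn_trans (ltn_ord i)).
by apply: eq_bigr => i _; rewrite nth_tup.
Qed.

End Part2.

Section Part3.
Context (R : realType) (Omega : Type) (K : nat) (B : nat -> Omega -> 'I_K.+1)
  (a b : 'I_K.+1 -> R -> R) (u : R).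
Hypothesis hu : forall j, 0 <= a j u /\ a j u <= a j u + b j u /\ a j u + b j u <= 1.

Let a_ge0 j : 0 <= a j u. Proof. by case: (hu j). Qed.
Let b_ge0 j : 0 <= b j u. Proof. by case: (hu j) => _ [+ _]; rewrite lerDl. Qed.
Let ab_le1 j : a j u + b j u <= 1. Proof. by case: (hu j) => _ []. Qed.
Let b_le1 j : b j u <= 1.
Proof. by apply: le_trans (ab_le1 j); rewrite lerDr. Qed.

Definition qq w t := \prod_(s < t) b (B s w) u.

Lemma qq_ge0 w t : 0 <= qq w t.
Proof. by apply: prodr_ge0 => i _. Qed.

Lemma qq_le1 w t : qq w t <= 1.
Proof. by apply: prodr_ile1 => i _; rewrite b_ge0 b_le1. Qed.

Lemma qqS w t : qq w t.+1 = qq w t * b (B t w) u.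
Proof. by rewrite /qq big_ord_recr. Qed.

Lemma qq_mono w t k : qq w (t + k) <= qq w t.
Proof.
elim: k => [|k IH]; first by rewrite addn0.
rewrite addnS qqS; apply: le_trans IH.
by rewrite ler_piMr ?qq_ge0 ?b_le1.
Qed.

Lemma gtermE w r : gterm B a b w u r = a (B r w) u * qq w r.
Proof. by rewrite /gterm prodN. Qed.

Lemma sum_bound w t : series (gterm B a b w u) t + qq w t <= 1.
Proof.
elim: t => [|t IH]; first by rewrite seriesEord /= big_ord0 add0r /qq big_ord0.
rewrite seriesSr gtermE qqS -addrA; apply: le_trans IH; rewrite lerD2l.
rewrite mulrC -mulrDr; rewrite ler_piMr ?qq_ge0 //.
Qed.

Lemma series_ge0 w t : 0 <= series (gterm B a b w u) t.
Proof. by rewrite seriesEord /=; apply: sumr_ge0 => i _; rewrite gtermE mulr_ge0 ?qq_ge0. Qed.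

Lemma series_cvg w : cvgn (series (gterm B a b w u)).
Proof.
apply: nondecreasing_is_cvgn.
  apply/nondecreasing_seqP => n; rewrite seriesSr lerDl gtermE mulr_ge0 ?qq_ge0 //.
exists 1 => _ [n _ <-]; apply: le_trans (sum_bound w n); rewrite lerDl qq_ge0 //.
Qed.

Definition Good w := forall (j : 'I_K.+1) N, exists s, (N <= s)%N /\ B s w = j.

Lemma qq_cvg0 (hinj : injective (fun j => (a j u, b j u))) (hK : (1 <= K)%N) w :
  Good w -> qq w t @[t --> \oo] --> 0.
Proof.
move=> G.
have [j bj] : exists j, b j u < 1.
  have b1 j : ~ (b j u < 1) -> (a j u, b j u) = (0, 1).
    move=> /negP; rewrite -leNgt => b1.
    have e : b j u = 1 by apply/eqP; rewrite eq_le b_le1 b1.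
    have a0 : a j u <= 0 by have := ab_le1 j; rewrite e; lra.
    by rewrite e; congr (_, _); apply/eqP; rewrite eq_le a0 a_ge0.
  case: (boolP (b ord0 u < 1)) => [h|/negP h0]; first by exists ord0.
  case: (boolP (b ord_max u < 1)) => [h|/negP h1]; first by exists ord_max.
  have := hinj ord0 ord_max; rewrite (b1 _ h0) (b1 _ h1) => /(_ erefl) /(congr1 val) /=.
  by move=> e; rewrite -e in hK.
have claim m : exists T, forall t, (T <= t)%N -> qq w t <= b j u ^+ m.
  elim: m => [|m [T HT]]; first by exists 0%N => t _; rewrite expr0 qq_le1.
  have [s [Ts Bs]] := G j T.
  exists s.+1 => t st.
  rewrite -(subnKC st) (le_trans (qq_mono _ _ _)) // qqS Bs exprSr.
  by rewrite ler_wpM2r ?b_ge0 // HT.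
apply/cvgrPdist_lt => e e0.
have : \forall n \near \oo, b j u ^+ n < e.
  have hc : `|b j u| < 1 by rewrite ger0_norm ?b_ge0.
  by move: (cvg_expr hc) => /cvgr_lt /(_ e e0).
move=> [N _ HN]; have [T HT] := claim N.
exists T => // t /= Tt; rewrite sub0r normrN ger0_norm ?qq_ge0 //.
exact: le_lt_trans (HT t Tt) (HN N (leqnn N)).
Qed.

End Part3.

Section Part4.
Context (R : realType) (d : measure_display) (Omega : measurableType d)
  (P : probability Omega R) (K : nat) (B : nat -> Omega -> 'I_K.+1)
  (p : 'I_K.+1 -> R).
Hypothesis hB : iid_seq P B p.
Hypothesis hp_pos : forall j, 0 < p j.
Hypothesis hp_sum : \sum_(j < K.+1) p j = 1.

Definition SS (s1 s2 : seq nat) (v : nat -> 'I_K.+1) (Q : pred 'I_K.+1) :=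
  [set w | (forall i, i \in s1 -> B i w = v i) /\ (forall i, i \in s2 -> Q (B i w))].

Lemma mBQ i (Q : pred 'I_K.+1) : measurable [set w | Q (B i w)].
Proof.
have -> : [set w | Q (B i w)] = \bigcup_(y in [set y | Q y]) [set w | B i w = y].
  apply/seteqP; split => w /=; first by move=> h; exists (B i w).
  by move=> [y /= Qy e]; rewrite e.
apply: fin_bigcup_measurable; first exact: finite_finset.
by move=> y _; apply: hB.1.
Qed.

Lemma mSS s1 s2 v Q : measurable (SS s1 s2 v Q).
Proof.
have -> : SS s1 s2 v Q =
  (\bigcap_(i in [set i | i \in s1]) [set w | B i w = v i]) `&`
  (\bigcap_(i in [set i | i \in s2]) [set w | Q (B i w)]).
  by apply/seteqP; split => w /= [h1 h2]; split => i /= hi; by [apply: h1|apply: h2].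
apply: measurableI; apply: bigcap_measurableType => k _; [exact: hB.1 | exact: mBQ].
Qed.

Lemma prodQ (Q : pred 'I_K.+1) (s2 s1 : seq nat) (v : nat -> 'I_K.+1) :
  uniq (s1 ++ s2) ->
  P (SS s1 s2 v Q) = ((\prod_(i <- s1) p (v i)) * (\sum_(x | Q x) p x) ^+ size s2)%:E.
Proof.
elim: s2 s1 v => [|x s2 IH] s1 v us.
  have us1 : uniq s1 by rewrite cats0 in us.
  have e := hB.2 s1 v us1.
  have -> : SS s1 [::] v Q = [set w | forall i, i \in s1 -> B i w = v i].
    by apply/seteqP; split => w /=; [case | split].
  by rewrite expr0 mulr1.
pose v' (y : 'I_K.+1) i := if i == x then y else v i.
pose F (y : 'I_K.+1) := SS (x :: s1) s2 (v' y) Q.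
have -> : SS s1 (x :: s2) v Q = \big[setU/set0]_(y < K.+1 | Q y) F y.
  rewrite -bigcup_seq_cond; apply/seteqP; split => w /=.
  - move=> [h1 h2]; exists (B x w).
      by apply/andP; split; [exact: mem_index_enum | apply: h2; rewrite mem_head].
    split => [i|i is2]; last by apply: h2; rewrite in_cons is2 orbT.
    rewrite in_cons /v' => /orP[/eqP ->|is1]; first by rewrite eqxx.
    case: eqP => [->|_]; last exact: h1.
    by [].
  - move=> [y /andP[_ Qy] [h1 h2]]; split => [i is1|i].
      have := h1 i; rewrite in_cons is1 orbT /v' => /(_ isT).
      case: eqP => // ix; move: us; rewrite cat_uniq => /and3P[_ /hasPn H _].
      by have := H x (mem_head _ _); rewrite -ix is1.
    rewrite in_cons => /orP[/eqP ->|]; last exact: h2.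
    by have := h1 x; rewrite mem_head /v' eqxx => /(_ isT) ->.
rewrite measure_bigsetU_ord_cond; last 2 first.
- by move=> y _; apply: mSS.
- move=> y z /= Qy Qz [w [[h1 _] [h2 _]]].
  by have := h1 x (mem_head _ _); rewrite h2 ?mem_head // /v' eqxx => ->.
have us' : uniq ((x :: s1) ++ s2).
  by move: us; rewrite -cat1s uniq_catCA cat1s.
pose S := \sum_(x | Q x) p x.
rewrite (eq_bigr (fun y => ((p y * \prod_(i <- s1) p (v i)) * S ^+ size s2)%:E)); last first.
  move=> y Qy; apply: etrans (IH (x :: s1) (v' y) us') _; congr (_ * _)%:E.
  rewrite big_cons /v' eqxx; congr (_ * _).
  rewrite big_seq_cond [in RHS]big_seq_cond; apply: eq_bigr => i /andP[is1 _].
  case: eqP => // ix; move: us; rewrite cat_uniq => /and3P[_ /hasPn H _].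
  by have := H x (mem_head _ _); rewrite -ix is1.
rewrite sumEFin; congr (_%:E).
by rewrite -big_distrl -big_distrl /= exprS -/S mulrCA mulrA.
Qed.

End Part4.

Section Part5.
Context (R : realType) (d : measure_display) (Omega : measurableType d)
  (P : probability Omega R) (K : nat) (B : nat -> Omega -> 'I_K.+1)
  (p : 'I_K.+1 -> R).
Hypothesis hB : iid_seq P B p.
Hypothesis hp_pos : forall j, 0 < p j.
Hypothesis hp_sum : \sum_(j < K.+1) p j = 1.

Lemma sum_neq j : \sum_(x | x != j) p x = 1 - p j.
Proof. by rewrite -hp_sum [in RHS](bigD1 j) //= addrC addrK. Qed.

Lemma p_le1 j : p j <= 1.
Proof.
rewrite -hp_sum (bigD1 j) //= lerDl; apply: sumr_ge0 => i _; exact: ltW.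
Qed.

Definition Avoid j N := [set w | forall s, (N <= s)%N -> B s w != j].

Lemma mAvoid j N : measurable (Avoid j N).
Proof.
have -> : Avoid j N = \bigcap_(s in [set s | (N <= s)%N]) ~` [set w | B s w = j].
  by apply/seteqP; split => w /= h s /h => [/eqP|/eqP].
by apply: bigcap_measurableType => k _; apply: measurableC; apply: hB.1.
Qed.

Lemma PAvoid j N : P (Avoid j N) = 0%E.
Proof.
have hm m : (P (Avoid j N) <= ((1 - p j) ^+ m)%:E)%E.
  have e := @prodQ _ _ _ _ _ _ _ hB (predC1 j) (iota N m) [::] (fun _ => j) (iota_uniq N m).
  rewrite /= big_nil mul1r size_iota sum_neq in e.
  rewrite -e; apply: le_measure; [exact/mem_set/mAvoid | apply/mem_set; exact: (@mSS _ _ _ _ _ _ _ hB) |].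
  move=> w /= h; split => // i; rewrite mem_iota => /andP[Ni _]; exact: h.
have P0 : (0 <= P (Avoid j N))%E by [].
have fin : P (Avoid j N) \is a fin_num.
  by rewrite ge0_fin_numE // (le_lt_trans (probability_le1 _ (mAvoid j N))) // ltey.
rewrite -(fineK fin) in hm P0 *; rewrite lee_fin in P0.
set r := fine _ in hm P0 *.
have c1 : `|1 - p j| < 1.
  have h1 := hp_pos j; have h2 := p_le1 j; rewrite ger0_norm; lra.
apply/eqP; rewrite eqe; rewrite eq_le P0 andbT; rewrite leNgt; apply/negP => r0.
have [M _ HM] : \forall n \near \oo, (1 - p j) ^+ n < r.
  by move: (cvg_expr c1) => /cvgr_lt /(_ r r0).
have := hm M; rewrite lee_fin => /le_lt_trans /(_ (HM M (leqnn M))).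
by rewrite ltxx.
Qed.

Lemma Good_ae : P.-negligible (~` Good B).
Proof.
apply: (negligibleS (A := \bigcup_N \big[setU/set0]_(k <- iota 0 K.+1) Avoid (inord k) N)).
  move=> w /= nG.
  have [j /existsNP [N hN]] : exists j, ~ (forall N, exists s, (N <= s)%N /\ B s w = j).
    by apply/existsNP.
  exists N => //; rewrite -bigcup_seq; exists (val j) => /=.
    by rewrite -[0%N :: _]/(iota 0 K.+1) mem_iota /= ltn_ord.
  rewrite inord_val => s Ns; apply/eqP => e; apply: hN; by exists s.
apply: negligible_bigcup => N; apply: negligible_bigsetU => k _.
by apply/negligibleP; [exact: mAvoid | exact: PAvoid].
Qed.

End Part5.

Lemma row_cvg (R : realType) n (X : nat -> 'I_n -> R) (l : 'I_n -> R) :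
  (forall k, X ^~ k @ \oo --> l k) ->
  (fun t => \row_k X t k) @ \oo --> (\row_k l k : 'rV[R]_n).
Proof.
move=> H.
apply/cvg_mx_entourageP => A entA.
apply: filter_forall => i. apply: filter_forall => j.
have HA : \forall t \near \oo, A (l j, X t j) by move: (H j) => /cvg_entourageP; apply.
rewrite near_map; apply: filterS HA => t /= HA; rewrite !mxE inE; exact: HA.
Qed.

Lemma series_dep (R : realType) (Omega : Type) (K : nat) (B : nat -> Omega -> 'I_K.+1)
  (a b : 'I_K.+1 -> R -> R) m w w' u :
  tup B m w = tup B m w' -> series (gterm B a b w u) m = series (gterm B a b w' u) m.
Proof.
move=> e; rewrite !seriesEord /=; apply: eq_bigr => r _.
rewrite /gterm !prodN (tup_eq e (ltn_ord r)); congr (_ * _).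
apply: eq_bigr => s _; rewrite (tup_eq e) // (ltn_trans (ltn_ord s)) //.
Qed.

Unset Implicit Arguments.

Theorem proposition3 (R : realType) (d : measure_display) (Omega : measurableType d)
  (P : probability Omega R) (K : nat) (hK : (1 <= K)%N)
  (p : 'I_K.+1 -> R) (hp_pos : forall j, 0 < p j) (hp_sum : \sum_(j < K.+1) p j = 1)
  (a b : 'I_K.+1 -> R -> R)
  (hab : forall u, 0 <= u < 1 -> forall j,
     0 <= a j u /\ a j u <= a j u + b j u /\ a j u + b j u <= 1)
  (hinj : forall u, 0 <= u < 1 -> injective (fun j => (a j u, b j u)))
  (hS_rc : forall z, 0 <= z <= 1 -> forall i u, 0 <= u < 1 ->
     (fun v => a i v + b i v * z) x @[x --> u^'+] --> a i u + b i u * z)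
  (hS_mono : forall z, 0 <= z <= 1 -> forall i u v, 0 <= u -> u <= v -> v < 1 ->
     a i u + b i u * z <= a i v + b i v * z)
  (th0 : R -> R)
  (hth0_range : forall u, 0 <= u < 1 -> 0 <= th0 u <= 1)
  (hth0_rc : forall u, 0 <= u < 1 -> th0 x @[x --> u^'+] --> th0 u)
  (hth0_mono : forall u v, 0 <= u -> u <= v -> v < 1 -> th0 u <= th0 v)
  (B : nat -> Omega -> 'I_K.+1) (hB : iid_seq P B p) :
  fidi_cvg_dist P (Theta a b th0 B) (ThetaInf a b B).
Proof.
move=> n us f fc [M hM].
pose HP t (v : t.-tuple 'I_K.+1) := f (\row_k ext (fold a b th0 v) (us k)).
have e1 t : (\int[P]_w (f (\row_k Theta a b th0 B t w (us k)))%:E =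
    \int[P]_w (HP t (tup B t w))%:E)%E.
  transitivity (\int[P]_w (HP t (rev_tuple (tup B t w)))%:E)%E.
    apply: eq_integral => w _; congr (EFin (f _)).
    by apply/matrixP => i k; rewrite !mxE ThetaE.
  rewrite (int_tup hB (fun v => HP t (rev_tuple v))) (int_tup hB); congr EFin.
  have rinj : injective (@rev_tuple t 'I_K.+1).
    by apply: (can_inj (g := @rev_tuple t 'I_K.+1)) => v; apply: val_inj; rewrite /= revK.
  rewrite (reindex_inj rinj) /=; apply: eq_bigr => v _.
  have -> : rev_tuple (rev_tuple v) = v by apply: val_inj; rewrite /= revK.
  by rewrite big_rev.
have -> : (fun t => (\int[P]_w (f (\row_k Theta a b th0 B t w (us k)))%:E)%E) =
    (fun t => \int[P]_w (HP t (tup B t w))%:E)%E by apply/funext => t; exact: e1.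
pose F w := (f (\row_k ThetaInf a b B w (us k)))%:E.
pose f_ t w := (HP t (tup B t w))%:E.
have cvgS w k : (ext (fun u => series (gterm B a b w u) m) (us k)) @[m --> \oo] -->
    ThetaInf a b B w (us k).
  rewrite /ext /ThetaInf; case: ifPn => [_|u0]; first exact: cvg_cst.
  case: ifPn => [_|u1]; first exact: cvg_cst.
  have hu : 0 <= us k < 1 by rewrite leNgt u0 /= ltNge u1.
  exact: (series_cvg (hab _ hu)).
have mF : measurable_fun setT F.
  change (measurable_fun setT (EFin \o (fun w => f (\row_k ThetaInf a b B w (us k))))).
  apply/measurable_EFinP.
  apply: (measurable_fun_cvg (h := fun m w => f (\row_k ext (fun u => series (gterm B a b w u) m) (us k)))).
    move=> m; apply: (meas_dep hB (t := m)) => w w' e.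
    congr (f _); apply/matrixP => i k; rewrite !mxE /ext.
    by case: ifP => // _; case: ifP => // _; rewrite (series_dep _ _ _ e).
  move=> w _; apply: (cvg_comp _ _ (row_cvg (cvgS w))); exact: fc.
have mf_ t : measurable_fun setT (f_ t).
  change (measurable_fun setT (EFin \o (fun w => HP t (tup B t w)))).
  apply/measurable_EFinP; apply: (meas_dep hB (t := t)) => w w' e.
  by rewrite e.
have ig : P.-integrable setT (fun _ => M%:E).
  exact: (finite_measure_integrable_cst _ M measurableT).
have f_g : {ae P, forall x t, setT x -> (`|f_ t x| <= (fun _ => M%:E) x)%E}.
  by apply: aeW => w t _; rewrite /f_ lee_fin /= hM.
have f_f : {ae P, forall x, setT x -> f_ ^~ x @ \oo --> F x}.
  apply: negligibleS (Good_ae hB hp_pos hp_sum).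
  move=> w /= Hn Gw; apply: Hn => _.
  apply: cvg_EFin; first exact: nearW.
  have hrow : (fun t => \row_k ext (fold a b th0 (tup B t w)) (us k)) @ \oo -->
      (\row_k ThetaInf a b B w (us k) : 'rV_n).
    apply: row_cvg => k.
    rewrite /ext /ThetaInf; case: ifPn => [_|u0]; first exact: cvg_cst.
    case: ifPn => [_|u1]; first exact: cvg_cst.
    have hu : 0 <= us k < 1 by rewrite leNgt u0 /= ltNge u1.
    have -> : (fun t => fold a b th0 (tup B t w) (us k)) = (fun t =>
      series (gterm B a b w (us k)) t + qq B b (us k) w t * th0 (us k)).
      by apply/funext => t; rewrite fold_tup.
    rewrite -[X in _ --> X]addr0 -(mul0r (th0 (us k))).
    apply: cvgD; first exact: (series_cvg (hab _ hu)).
    apply: cvgMr_tmp.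
    exact: (qq_cvg0 (hab _ hu) (hinj _ hu) hK Gw).
  exact: (cvg_comp _ _ hrow (fc _)).
have [_ _ H3] := dominated_convergence measurableT mf_ mF f_f ig f_g.
exact: H3.
Qed.
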